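(* If $M\approx N$ then $M\stackrel{\bullet}{\approx}N$.
   Context: Setting: a graph-based calculus for wireless networks with local broadcast. Networks are given by $M::=G\langle\Phi\rangle\mid M\backslash c\mid M\oplus_DN$. $G$ is a finite undirected graph of locations, $\Phi$ assigns sequential processes to locations, and $M(p)$ is the process at location $p$. Reduction semantics $M\to M'$ is defined by the following rules. - (R-Bcast): Suppose $M(p)=\overline c(e).P+R$ and ${\sf eval}(e)=v$. Let $L=\{q_i\mid p\frown_Mq_i,\ M(q_i)=c(x_i).Q_i+R_i\}$. Then $M\to M[p\mapsto P][q_i\mapsto Q_i\{v/x_i\}]_{q_i\in L}$. - Closure under $\oplus_D$: this applies when no node linked via $D$ can receive the broadcast. - Closure under restriction. - Closure under structural congruence $\equiv$. $\to^{\ast}$ is the reflexive-transitive closure of $\to$. Barb: $M\downarrow_{\overline c}$ if $M\equiv N\backslash I$, $c\notin I$, and $M(p)\equiv\overline c(e).P+R$ for some location $p$. A weak barbed bisimulation is a symmetric relation $\mathcal{B}$ such that, whenever $(M,N)\in\mathcal{B}$, both of the following hold: - $M\to M'$ implies $N\to^{\ast}N'$ with $(M',N')\in\mathcal{B}$ for some $N'$. - $M\downarrow_{\overline c}$ implies $N\to^{\ast}N'$ with $N'\downarrow_{\overline c}$ for some $N'$. $\stackrel{\bullet}{\approx}$ is the union of all weak barbed bisimulations. Labelled transitions $M\xrightarrow{\delta}M'$ have labels $\delta::=p:\alpha\mid\tau$ with $\alpha::=cv\mid\overline cv$. A label $p:\alpha$ is a receive or broadcast at $p$; a $\tau$ transition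 is a broadcast on a restricted channel. $M\xrightarrow{\tau^{\ast}}M'$ means a finite, possibly empty, sequence of $\tau$-steps. $M\stackrel{p:\alpha}{\Longrightarrow}M'$ means $M\xrightarrow{\tau^{\ast}}M_1\xrightarrow{p:\alpha}M_1'\xrightarrow{\tau^{\ast}}M'$ for some $M_1,M_1'$. A weak bisimulation is a localized relation $\mathcal{R}\subseteq{\bf Net}\times\mathcal{P}({\sf Loc}^2)\times{\bf Net}$ satisfying the following: - $E\subseteq|M|\times|N|$ for every $(M,E,N)\in\mathcal{R}$. - It is symmetric: $(M,E,N)\in\mathcal{R}$ implies $(N,E^{-1},M)\in\mathcal{R}$. - Whenever $(M,E,N)\in\mathcal{R}$, $M\xrightarrow{\tau}M'$ implies $N\xrightarrow{\tau^{\ast}}N'$ with $(M',E,N')\in\mathcal{R}$ for some $N'$. - Whenever $(M,E,N)\in\mathcal{R}$, $M\xrightarrow{p:\alpha}M'$ implies $N\stackrel{q:\alpha}{\Longrightarrow}N'$ for some $q$ with $(p,q)\in E$ and $(M',E,N')\in\mathcal{R}$. $M\approx N$ iff $(M,E,N)\in\mathcal{R}$ for some weak bisimulation $\mathcal{R}$ and some $E$. *)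

(* Defs.v *)
From Stdlib Require Import Relations.
From mathcomp Require Import all_boot.
Set Implicit Arguments.
Unset Strict Implicit.
Unset Printing Implicit Defensive.

Definition loc := nat.
Definition chan := nat.
Definition var := nat.
Definition val := nat.
Definition pvar := nat.

Inductive exp : Type :=
| EVal (v : val)
| EVar (x : var)
| EAdd (e1 e2 : exp).

(* eval is total; free variables (which never occur in closed, running
   processes) evaluate to the default value 0. *)
Fixpoint eval (e : exp) : val :=
  match e with
  | EVal v => v
  | EVar _ => 0
  | EAdd a b => eval a + eval b
  end.

Fixpoint esubst (e : exp) (x : var) (v : val) : exp :=
  match e with
  | EVal w => EVal w
  | EVar y => if y == x then EVal v else EVar y
  | EAdd a b => EAdd (esubst a x v) (esubst b x v)
  end.

Inductive proc : Type :=
| PNil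
| POut (c : chan) (e : exp) (P : proc)
| PIn (c : chan) (x : var) (P : proc)
| PSum (P Q : proc)
| PIf (e1 e2 : exp) (P Q : proc)
| PRec (X : pvar) (P : proc)
| PVar (X : pvar).

Fixpoint psubst (P : proc) (x : var) (v : val) : proc :=
  match P with
  | PNil => PNil
  | POut c e P1 => POut c (esubst e x v) (psubst P1 x v)
  | PIn c y P1 => if y == x then PIn c y P1 else PIn c y (psubst P1 x v)
  | PSum P1 P2 => PSum (psubst P1 x v) (psubst P2 x v)
  | PIf e1 e2 P1 P2 =>
      PIf (esubst e1 x v) (esubst e2 x v) (psubst P1 x v) (psubst P2 x v)
  | PRec X P1 => PRec X (psubst P1 x v)
  | PVar X => PVar X
  end.

Fixpoint psubstX (P : proc) (X : pvar) (Q : proc) : proc :=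
  match P with
  | PNil => PNil
  | POut c e P1 => POut c e (psubstX P1 X Q)
  | PIn c y P1 => PIn c y (psubstX P1 X Q)
  | PSum P1 P2 => PSum (psubstX P1 X Q) (psubstX P2 X Q)
  | PIf e1 e2 P1 P2 => PIf e1 e2 (psubstX P1 X Q) (psubstX P2 X Q)
  | PRec Y P1 => if Y == X then PRec Y P1 else PRec Y (psubstX P1 X Q)
  | PVar Y => if Y == X then Q else PVar Y
  end.

(* channel renaming P{b/a} (channels are never bound inside processes) *)
Fixpoint prename (a b : chan) (P : proc) : proc :=
  let r c := if c == a then b else c in
  match P with
  | PNil => PNil
  | POut c e P1 => POut (r c) e (prename a b P1)
  | PIn c y P1 => PIn (r c) y (prename a b P1)
  | PSum P1 P2 => PSum (prename a b P1) (prename a b P2)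
  | PIf e1 e2 P1 P2 => PIf e1 e2 (prename a b P1) (prename a b P2)
  | PRec X P1 => PRec X (prename a b P1)
  | PVar X => PVar X
  end.

Fixpoint pchans (P : proc) : seq chan :=
  match P with
  | PNil => [::]
  | POut c _ P1 => c :: pchans P1
  | PIn c _ P1 => c :: pchans P1
  | PSum P1 P2 => pchans P1 ++ pchans P2
  | PIf _ _ P1 P2 => pchans P1 ++ pchans P2
  | PRec _ P1 => pchans P1
  | PVar _ => [::]
  end.

Inductive pcong : proc -> proc -> Prop :=
| PC_refl P : pcong P P
| PC_sym P Q : pcong P Q -> pcong Q P
| PC_trans P Q R : pcong P Q -> pcong Q R -> pcong P R
| PC_sumC P Q : pcong (PSum P Q) (PSum Q P)
| PC_sumA P Q R : pcong (PSum (PSum P Q) R) (PSum P (PSum Q R))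
| PC_sum0 P : pcong (PSum P PNil) P
| PC_out c e P Q : pcong P Q -> pcong (POut c e P) (POut c e Q)
| PC_in c x P Q : pcong P Q -> pcong (PIn c x P) (PIn c x Q)
| PC_sum P P' Q : pcong P P' -> pcong (PSum P Q) (PSum P' Q)
| PC_if e1 e2 P P' Q Q' :
    pcong P P' -> pcong Q Q' -> pcong (PIf e1 e2 P Q) (PIf e1 e2 P' Q')
| PC_rec X P Q : pcong P Q -> pcong (PRec X P) (PRec X Q)
| PC_ifT e1 e2 P Q : eval e1 = eval e2 -> pcong (PIf e1 e2 P Q) P
| PC_ifF e1 e2 P Q : eval e1 <> eval e2 -> pcong (PIf e1 e2 P Q) Q
| PC_unfold X P : pcong (PRec X P) (psubstX P X (PRec X P)).

(* A finite undirected graph G is given by its finite list of nodes V and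
   a finite list of edges Ed, read as unordered pairs (see adjG). *)
Inductive net : Type :=
| NGraph (V : seq loc) (Ed : seq (loc * loc)) (F : loc -> proc)
| NRes (M : net) (c : chan)
| NPar (M : net) (D : seq (loc * loc)) (N : net).

Fixpoint restrs (M : net) (I : seq chan) : net :=
  match I with
  | [::] => M
  | c :: I' => restrs (NRes M c) I'
  end.

Fixpoint locs (M : net) : seq loc :=
  match M with
  | NGraph V _ _ => V
  | NRes M1 _ => locs M1
  | NPar M1 _ N1 => locs M1 ++ locs N1
  end.

Fixpoint proc_at (M : net) (p : loc) : option proc :=
  match M with
  | NGraph V _ F => if p \in V then Some (F p) else None
  | NRes M1 _ => proc_at M1 p
  | NPar M1 _ N1 => if p \in locs M1 then proc_at M1 p else proc_at N1 p
  end.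

Definition linked (D : seq (loc * loc)) (p q : loc) : bool :=
  ((p, q) \in D) || ((q, p) \in D).

Definition adjG (V : seq loc) (Ed : seq (loc * loc)) (p q : loc) : bool :=
  [&& p \in V, q \in V, p != q & linked Ed p q].

Fixpoint adj (M : net) (p q : loc) : bool :=
  match M with
  | NGraph V Ed _ => adjG V Ed p q
  | NRes M1 _ => adj M1 p q
  | NPar M1 D N1 =>
      [|| adj M1 p q, adj N1 p q
        | [&& p != q, linked D p q &
              ((p \in locs M1) && (q \in locs N1))
              || ((p \in locs N1) && (q \in locs M1))]]
  end.

Fixpoint free_at (M : net) (p : loc) (c : chan) : bool :=
  match M with
  | NGraph V _ _ => p \in V
  | NRes M1 d => (d != c) && free_at M1 p c
  | NPar M1 _ N1 => if p \in locs M1 then free_at M1 p c else free_at N1 p c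
  end.

Fixpoint nocc (M : net) (d : chan) : bool :=
  match M with
  | NGraph V _ F => has (fun q => d \in pchans (F q)) V
  | NRes M1 c => (c == d) || nocc M1 d
  | NPar M1 _ N1 => nocc M1 d || nocc N1 d
  end.

Fixpoint nfree (M : net) (d : chan) : bool :=
  match M with
  | NGraph V _ F => has (fun q => d \in pchans (F q)) V
  | NRes M1 c => (c != d) && nfree M1 d
  | NPar M1 _ N1 => nfree M1 d || nfree N1 d
  end.

Fixpoint nrename (a b : chan) (M : net) : net :=
  match M with
  | NGraph V Ed F => NGraph V Ed (fun q => prename a b (F q))
  | NRes M1 c => if c == a then NRes M1 c else NRes (nrename a b M1) c
  | NPar M1 D N1 => NPar (nrename a b M1) D (nrename a b N1)
  end.

Inductive netcong : net -> net -> Prop :=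
| NC_refl M : netcong M M
| NC_sym M N : netcong M N -> netcong N M
| NC_trans M N K : netcong M N -> netcong N K -> netcong M K
| NC_graph V Ed F F' :
    (forall q, q \in V -> pcong (F q) (F' q)) ->
    netcong (NGraph V Ed F) (NGraph V Ed F')
| NC_graph_iso V Ed V' Ed' F :
    V =i V' -> (forall p q, adjG V Ed p q = adjG V' Ed' p q) ->
    netcong (NGraph V Ed F) (NGraph V' Ed' F)
| NC_res M M' c : netcong M M' -> netcong (NRes M c) (NRes M' c)
| NC_parl M M' D N : netcong M M' -> netcong (NPar M D N) (NPar M' D N)
| NC_parr M D N N' : netcong N N' -> netcong (NPar M D N) (NPar M D N')
| NC_parC M D N : netcong (NPar M D N) (NPar N D M)
| NC_resC M c d : netcong (NRes (NRes M c) d) (NRes (NRes M d) c)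
| NC_extr M c D N :
    ~~ nfree N c -> netcong (NPar (NRes M c) D N) (NRes (NPar M D N) c)
| NC_alpha M c d :
    ~~ nocc M d -> netcong (NRes M c) (NRes (nrename c d M) d).

Fixpoint nrel (Rl : loc -> proc -> proc -> Prop) (M M' : net) : Prop :=
  match M, M' with
  | NGraph V Ed F, NGraph V' Ed' F' =>
      [/\ V' = V, Ed' = Ed &
          forall q, if q \in V then Rl q (F q) (F' q) else F' q = F q]
  | NRes M1 c, NRes M1' c' => c' = c /\ nrel Rl M1 M1'
  | NPar M1 D N1, NPar M1' D' N1' => [/\ D' = D, nrel Rl M1 M1' & nrel Rl N1 N1']
  | _, _ => False
  end.

Definition listens (P : proc) (c : chan) : Prop :=
  exists x Q R, pcong P (PSum (PIn c x Q) R).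

(* a node with process X, which hears (b = true) or does not hear a
   broadcast of v on c, evolves into X' *)
Definition hear (b : bool) (c : chan) (v : val) (X X' : proc) : Prop :=
  (b /\ exists x Q R, pcong X (PSum (PIn c x Q) R) /\ X' = psubst Q x v)
  \/ (~ (b /\ listens X c) /\ X' = X).

Definition can_recv (N : net) (q : loc) (c : chan) : Prop :=
  free_at N q c /\ exists X, proc_at N q = Some X /\ listens X c.

(* (R-Bcast): M(p) ≡ \overline c(e).P + R, eval e = v, and M' is
   M[p ↦ P][q_i ↦ Q_i{v/x_i}] for the neighbours q_i of p listening on c *)
Definition bcast (M : net) (p : loc) (c : chan) (v : val) (M' : net) : Prop :=
  exists X e P R,
    [/\ proc_at M p = Some X, pcong X (PSum (POut c e P) R),
        free_at M p c, eval e = v &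
        nrel (fun q X0 X1 =>
                if q == p then X1 = P
                else hear (adj M p q && free_at M q c) c v X0 X1) M M'].

Definition recv_at (M : net) (p : loc) (c : chan) (v : val) (M' : net) : Prop :=
  exists X x Q R,
    [/\ proc_at M p = Some X, pcong X (PSum (PIn c x Q) R),
        free_at M p c &
        nrel (fun q X0 X1 => if q == p then X1 = psubst Q x v else X1 = X0)
          M M'].

Definition no_D_receiver (D : seq (loc * loc)) (N : net) (p : loc) (c : chan) : Prop :=
  ~ (exists q, [/\ q \in locs N, linked D p q & can_recv N q c]).

(* Reduction semantics.  The label records the broadcast (sender and
   channel) when its channel is visible at this level, None when it has
   been hidden by a restriction. *)

Definition hide (d : chan) (l : option (loc * chan)) : option (loc * chan) :=
  match l with
  | Some (p, c) => if c == d then None else Some (p, c)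
  | None => None
  end.

Inductive bred : net -> option (loc * chan) -> net -> Prop :=
| R_Bcast M p c v M' : bcast M p c v M' -> bred M (Some (p, c)) M'
| R_Res M d l M' : bred M l M' -> bred (NRes M d) (hide d l) (NRes M' d)
| R_Par M D N l M' :
    bred M l M' ->
    (forall p c, l = Some (p, c) -> no_D_receiver D N p c) ->
    bred (NPar M D N) l (NPar M' D N)
| R_Struct M M1 l M1' M' :
    netcong M M1 -> bred M1 l M1' -> netcong M1' M' -> bred M l M'.

Definition red (M M' : net) : Prop := exists l, bred M l M'.
Definition reds : net -> net -> Prop := clos_refl_trans net red.

Definition barb (M : net) (c : chan) : Prop :=
  exists N I p X e P R,
    [/\ netcong M (restrs N I), c \notin I, proc_at N p = Some X,
        free_at N p c & pcong X (PSum (POut c e P) R)].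

Definition weak_barbed_bisim (B : net -> net -> Prop) : Prop :=
  [/\ (forall M N, B M N -> B N M),
      (forall M N M', B M N -> red M M' -> exists N', reds N N' /\ B M' N') &
      (forall M N c, B M N -> barb M c -> exists N', reds N N' /\ barb N' c)].

Definition wb_barbed (M N : net) : Prop :=
  exists B, weak_barbed_bisim B /\ B M N.

Inductive act : Type :=
| AIn (c : chan) (v : val)
| AOut (c : chan) (v : val).

Inductive label : Type :=
| LAct (p : loc) (a : act)
| LTau.

Definition act_chan (a : act) : chan :=
  match a with AIn c _ => c | AOut c _ => c end.

Definition label_on (l : label) (d : chan) : bool :=
  match l with LAct _ a => act_chan a == d | LTau => false end.

Inductive lts : net -> label -> net -> Prop :=
| L_Out M p c v M' : bcast M p c v M' -> lts M (LAct p (AOut c v)) M'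
| L_In M p c v M' : recv_at M p c v M' -> lts M (LAct p (AIn c v)) M'
| L_Hide M p c v M' :
    lts M (LAct p (AOut c v)) M' -> lts (NRes M c) LTau (NRes M' c)
| L_Res M d l M' :
    lts M l M' -> ~~ label_on l d -> lts (NRes M d) l (NRes M' d)
| L_Par M D N l M' :
    lts M l M' ->
    (forall p c v, l = LAct p (AOut c v) -> no_D_receiver D N p c) ->
    lts (NPar M D N) l (NPar M' D N)
| L_Struct M M1 l M1' M' :
    netcong M M1 -> lts M1 l M1' -> netcong M1' M' -> lts M l M'.

Definition taus : net -> net -> Prop :=
  clos_refl_trans net (fun A B => lts A LTau B).

Definition wlts (M : net) (p : loc) (a : act) (M' : net) : Prop :=
  exists M1 M1', [/\ taus M M1, lts M1 (LAct p a) M1' & taus M1' M'].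

Definition weak_bisim (R : net -> (loc -> loc -> Prop) -> net -> Prop) : Prop :=
  [/\ (forall M E N, R M E N -> forall p q, E p q -> p \in locs M /\ q \in locs N),
      (forall M E N, R M E N -> R N (fun q p => E p q) M),
      (forall M E N M', R M E N -> lts M LTau M' ->
          exists N', taus N N' /\ R M' E N') &
      (forall M E N p a M', R M E N -> lts M (LAct p a) M' ->
          exists q N', [/\ E p q, wlts N q a N' & R M' E N'])].

Definition wbisimilar (M N : net) : Prop :=
  exists R E, weak_bisim R /\ R M E N.

(* Main.v *)
From Stdlib Require Import Relations Classical ClassicalEpsilon.
From mathcomp Require Import all_boot.
Require Import Defs.
Set Implicit Arguments.

Lemma lts_bred : forall M l M', lts M l M' ->
  match l with
  | LTau => bred M None M'
  | LAct p (AOut c v) => bred M (Some (p, c)) M'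
  | LAct _ (AIn _ _) => True
  end.
Proof.
  intros M l M' H; induction H.
  - eapply R_Bcast; eauto.
  - exact I.
  - have := R_Res c IHlts. simpl. by rewrite eqxx.
  - destruct l as [p [c v|c v]|]; simpl in *; auto.
    + have := R_Res d IHlts. simpl. by rewrite (negbTE H0).
    + exact (R_Res d IHlts).
  - destruct l as [p [c v|c v]|]; simpl in *; auto.
    + apply R_Par; auto. intros p0 c0 E. injection E; intros; subst.
      eapply H0; reflexivity.
    + apply R_Par; auto. intros p0 c0 E; discriminate.
  - destruct l as [p [c v|c v]|]; simpl in *; auto; eapply R_Struct; eauto.
Qed.

Lemma taus_reds : forall M N, taus M N -> reds M N.
Proof.
  intros M N H; induction H.
  - apply rt_step. exists None. exact (lts_bred H).
  - apply rt_refl.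
  - eapply rt_trans; eauto.
Qed.

Lemma wlts_reds : forall N q c v N', wlts N q (AOut c v) N' -> reds N N'.
Proof.
  intros N q c v N' [N1 [N1' [H1 H2 H3]]].
  eapply rt_trans; [apply taus_reds; eauto|].
  eapply rt_trans; [|apply taus_reds; eauto].
  apply rt_step. exists (Some (q, c)). exact (lts_bred H2).
Qed.

Lemma bred_lts : forall M l M', bred M l M' ->
  match l with
  | None => lts M LTau M'
  | Some (p, c) => exists v, lts M (LAct p (AOut c v)) M'
  end.
Proof.
  intros M l M' H; induction H.
  - exists v. apply L_Out; auto.
  - destruct l as [[p c]|]; simpl.
    + destruct IHbred as [v Hv].
      case: (eqVneq c d) => [E|E].
      * subst. eapply L_Hide. exact Hv.
      * exists v. apply L_Res; auto.
    + apply L_Res; auto.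
  - destruct l as [[p c]|].
    + destruct IHbred as [v Hv]. exists v. apply L_Par; auto.
      intros p0 c0 v0 E. injection E; intros; subst. apply H0; reflexivity.
    + apply L_Par; auto. intros; discriminate.
  - destruct l as [[p c]|].
    + destruct IHbred as [v Hv]. exists v. eapply L_Struct; eauto.
    + eapply L_Struct; eauto.
Qed.

Definition dbarb (K : net) (c : chan) : Prop :=
  exists p X e P R, [/\ proc_at K p = Some X, free_at K p c &
                        pcong X (PSum (POut c e P) R)].

Lemma proc_at_locs : forall M p X, proc_at M p = Some X -> p \in locs M.
Proof.
  induction M; simpl; intros p X H.
  - by case: (p \in V) H.
  - eauto.
  - rewrite mem_cat. case E: (p \in locs M1) H => H //.
    apply/orP; right; eauto.
Qed.

Lemma lts_barb_aux : forall M l M', lts M l M' ->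
  forall q c v, l = LAct q (AOut c v) -> exists K, netcong M K /\ dbarb K c.
Proof.
  intros M l M' H; induction H; intros q c0 v0 E; try discriminate.
  - injection E; intros; subst.
    destruct H as [X [e [P [R [H1 H2 H3 H4 H5]]]]].
    exists M; split; [apply NC_refl|]. exists q, X, e, P, R; split; auto.
  - subst. simpl in H0. destruct (IHlts q c0 v0 erefl) as [K [HK [p [X [e [P [R [H1 H2 H3]]]]]]]].
    exists (NRes K d); split; [apply NC_res; auto|].
    exists p, X, e, P, R; split; simpl; auto.
    rewrite H2 andbT. by rewrite eq_sym.
  - destruct (IHlts q c0 v0 E) as [K [HK [p [X [e [P [R [H1 H2 H3]]]]]]]].
    exists (NPar K D N); split; [apply NC_parl; auto|].
    have Hp : p \in locs K.
    { eapply proc_at_locs; exact H1. }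
    exists p, X, e, P, R; split; simpl; rewrite ?Hp; auto.
  - destruct (IHlts q c0 v0 E) as [K [HK HB]].
    exists K; split; auto. eapply NC_trans; eauto.
Qed.

Lemma lts_barb : forall M q c v M', lts M (LAct q (AOut c v)) M' -> barb M c.
Proof.
  intros M q c v M' H.
  destruct (lts_barb_aux H erefl) as [K [HK [p [X [e [P [R [H1 H2 H3]]]]]]]].
  exists K, [::], p, X, e, P, R; split; auto.
Qed.

Lemma nrel_exists : forall (Rl : loc -> proc -> proc -> Prop),
  (forall q X0, exists X1, Rl q X0 X1) -> forall M, exists M', nrel Rl M M'.
Proof.
  intros Rl HR M; induction M.
  - exists (NGraph V Ed (fun q => if q \in V then
        proj1_sig (constructive_indefinite_description _ (HR q (F q))) else F q)).
    simpl; split; auto. intros q. case: (q \in V) => //.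
    exact (proj2_sig (constructive_indefinite_description _ (HR q (F q)))).
  - destruct IHM as [M' HM]. exists (NRes M' c); simpl; auto.
  - destruct IHM1 as [M1' H1]; destruct IHM2 as [M2' H2].
    exists (NPar M1' D M2'); simpl; split; auto.
Qed.

Lemma restrs_lts : forall I N l N', lts N l N' ->
  (forall d, d \in I -> ~~ label_on l d) -> lts (restrs N I) l (restrs N' I).
Proof.
  induction I as [|d I IH]; intros N l N' H HI; simpl; auto.
  apply IH.
  - apply L_Res; auto. apply HI. by rewrite inE eqxx.
  - intros d0 Hd. apply HI. by rewrite inE Hd orbT.
Qed.

Lemma barb_lts : forall M c, barb M c -> exists p v M', lts M (LAct p (AOut c v)) M'.
Proof.
  intros M c [N [I [p [X [e [P [R [H1 H2 H3 H4 H5]]]]]]]].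
  set Rl := (fun (q : loc) (X0 X1 : proc) =>
                if q == p then X1 = P
                else hear (adj N p q && free_at N q c) c (eval e) X0 X1).
  have HR : forall q X0, exists X1, Rl q X0 X1.
  { intros q X0. unfold Rl. case: (q == p).
    - exists P; reflexivity.
    - destruct (classic ((adj N p q && free_at N q c) /\ listens X0 c)) as [[Hb [x [Q [R0 HL]]]]|Hn].
      + exists (psubst Q x (eval e)). left. split; auto. exists x, Q, R0; split; auto.
      + exists X0. right. split; auto. }
  destruct (@nrel_exists Rl HR N) as [N' HN'].
  exists p, (eval e), (restrs N' I).
  eapply L_Struct; [exact H1| |apply NC_refl].
  apply restrs_lts.
  - apply L_Out. exists X, e, P, R; split; auto.
  - intros d Hd. simpl. apply/eqP => E. subst. by rewrite Hd in H2.
Qed.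

Theorem proposition4 : forall M N : net, wbisimilar M N -> wb_barbed M N.
Proof.
  intros M N HMN. exists wbisimilar. split; auto. split.
  - intros A B [R [E [HR HAB]]]. exists R, (fun q p => E p q); split; auto.
    destruct HR as [_ Hs _ _]. auto.
  - intros A B A' [R [E [HR HAB]]] [l Hl].
    have HR' := HR. destruct HR' as [_ _ Ht Ha].
    have := bred_lts Hl. destruct l as [[p c]|].
    + intros [v Hv]. destruct (Ha _ _ _ _ _ _ HAB Hv) as [q [B' [_ Hw HR2]]].
      exists B'; split; [exact (wlts_reds Hw)|]. exists R, E; auto.
    + intros Hv. destruct (Ht _ _ _ _ HAB Hv) as [B' [Hw HR2]].
      exists B'; split; [exact (taus_reds Hw)|]. exists R, E; auto.
  - intros A B c [R [E [HR HAB]]] Hb.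
    destruct HR as [_ _ _ Ha].
    destruct (barb_lts Hb) as [p [v [A' Hv]]].
    destruct (Ha _ _ _ _ _ _ HAB Hv) as [q [B' [_ [B1 [B1' [Hw1 Hw2 Hw3]]] _]]].
    exists B1; split; [exact (taus_reds Hw1)|]. exact (lts_barb Hw2).
Qed.
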